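(* In the IM-OCP setting described in the context, with $r_1\in[0,B]$ and any non-increasing sequence of positive step sizes $(\eta_t)_{t\ge1}$, for every $T\ge1$ the expected miscoverage error satisfies $$\overline{\mathrm{MisCov}}(T):=\left|\mathbb{E}\left[\frac{1}{T}\sum_{t=1}^T E_t\right]-\alpha\right|\le\frac{1}{T\eta_T}\left(LB+\frac{L\eta_1}{\mu\,p_{\min}}\right),$$ where $p_{\min}=\min_{t\in\{1,\dots,T\}}p_t$ and the expectation is over the feedback indicators $(\mathrm{obs}_t)$.
   Context: Fix $\alpha\in(0,1)$ and $B>0$. Let $(r_t^* )_{t\ge1}$ be an arbitrary deterministic sequence of scores with $r_t^*\in[0,B]$ (the score $r_t^*=s(X_t,Y_t)$ of the true label; the prediction set at time $t$ is $\{y: s(X_t,y)\le r_t\}$). Given thresholds $r_t$, the miscoverage indicator is $E_t=\mathbb{1}\{r_t^*>r_t\}$. The quantile loss is $\ell_{1-\alpha}(r,r^* )=(\alpha-\mathbb{1}\{r<r^*\})(r-r^* )$. Let $P$ be a probability distribution on $[0,B]$ with bounded density, $\sigma>0$, and $R(r)=\mathbb{E}_{r^*\sim P}[\ell_{1-\alpha}(r,r^* )]+\frac{\sigma}{2}r^2$; $R$ is differentiable and $\nabla R$ is a continuous strictly increasing bijection of $\mathbb{R}$. Let $\mu>0$ be a constant such that $R$ is $\mu$-strongly convex (e.g. $\mu=\sigma$) and $L>0$ a constant such that $\nabla R$ is $L$-Lipschitz. Feedback: $p_t\in(0,1]$ and $(\mathrm{obs}_t)_{t\ge1}$ are independent Bernoulli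 random variables with $\Pr(\mathrm{obs}_t=1)=p_t$. IM-OCP: given $r_1$ and step sizes $\eta_t>0$, for $t\ge2$ the threshold $r_t$ is defined by $$\nabla R(r_t)=\nabla R(r_{t-1})-\eta_{t-1}(\alpha-E_{t-1})\frac{\mathrm{obs}_{t-1}}{p_{t-1}}.$$ *)

(* Defs.v *)
From HB Require Import structures.
From mathcomp Require Import all_boot all_order all_algebra.
From mathcomp Require Import all_classical all_reals all_analysis.
Set Implicit Arguments. Unset Strict Implicit. Unset Printing Implicit Defensive.
Import Order.TTheory GRing.Theory Num.Theory.
Import numFieldNormedType.Exports.
Local Open Scope classical_set_scope.
Local Open Scope ring_scope.

Section Defs.
Variable R : realType.

Definition qloss (alpha r rs : R) : R := (alpha - ((r < rs)%R)%:R) * (r - rs).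

Definition risk (P : probability R R) (alpha sigma : R) (r : R) : R :=
  Rintegral P setT (fun x => qloss alpha r x) + sigma / 2 * r ^+ 2.

Definition supported_on (P : probability R R) (B : R) : Prop :=
  P [set x | 0 <= x <= B] = 1%E.

Definition has_bounded_density (P : probability R R) : Prop :=
  exists (f : R -> R) (K : R),
    measurable_fun setT f /\ (forall x, 0 <= f x <= K) /\
    forall A, measurable A ->
      P A = (\int[lebesgue_measure]_(x in A) (f x)%:E)%E.

Definition strongly_convex (mu : R) (f : R -> R) : Prop :=
  forall x y t, 0 <= t <= 1 ->
    f (t * x + (1 - t) * y) <=
      t * f x + (1 - t) * f y - mu / 2 * t * (1 - t) * (x - y) ^+ 2.

Definition lipschitzL (L : R) (g : R -> R) : Prop :=
  forall x y, `|g x - g y| <= L * `|x - y|.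

(* feedback realisation: obs_t = w (t-1) for 1 <= t <= T (other values irrelevant) *)
Definition obs_of (T : nat) (w : {ffun 'I_T -> bool}) (t : nat) : bool :=
  if @insub _ (fun i => i < T)%N 'I_T t.-1 is Some i then w i else false.

(* probability of the outcome w under independent Bernoulli(p_t), t = 1..T *)
Definition bern_weight (p : nat -> R) (T : nat) (w : {ffun 'I_T -> bool}) : R :=
  \prod_(i < T) (if w i then p i.+1 else 1 - p i.+1).

Definition exp_miscov (p : nat -> R) (rstar : nat -> R)
    (r : (nat -> bool) -> nat -> R) (T : nat) : R :=
  \sum_(w : {ffun 'I_T -> bool})
     bern_weight p w *
     (T%:R^-1 * \sum_(1 <= t < T.+1) ((rstar t > r (obs_of w) t)%R)%:R).

End Defs.

(* Main.v *)
Require Import Defs.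
From HB Require Import structures.
From mathcomp Require Import all_boot all_order all_algebra.
From mathcomp Require Import all_classical all_reals all_analysis.
From mathcomp Require Import ring lra zify.
From Stdlib Require Import Lia.
Import Order.TTheory GRing.Theory Num.Theory.
Import numFieldNormedType.Exports.
Local Open Scope classical_set_scope.
Local Open Scope ring_scope.

Section S.
Context {R : realType}.

Lemma right_cvg {g : R -> R} : cvg (g @ 0^') -> g @ 0^'+ --> lim (g @ 0^').
Proof.
move=> cvfx A /cvfx /nbhs_ballP [_ /posnumP[e] xe_A].
by exists e%:num => //= y xe_y /gt_eqF/negbT/xe_A; exact.
Qed.

Lemma sc_grad_eps (f : R -> R) mu : (forall x, derivable f x 1) ->
  0 <= mu -> strongly_convex mu f -> forall x y e, 0 < e < 1 ->
  derive1 f x * (y - x) <= f y - f x - mu / 2 * (1 - e) * (y - x) ^+ 2.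
Proof.
move=> df mu0 sc x y e /andP[e0 e1].
set d := y - x.
have dfx : differentiable f x by apply/derivable1_diffP.
have Dd : 'D_d f x = derive1 f x * d.
  rewrite derive1E !deriveE // -[X in 'd f x X]mulr1 -[d * 1]/(d *: (1:R^o)).
  by rewrite linearZ /= mulrC.
have cv := right_cvg (diff_derivable (v:=d) dfx).
rewrite -Dd /derive.
apply: (cvgr_to_le cv).
near=> h.
have h0 : 0 < h by near: h; exact: nbhs_right_gt.
have he : h < e by near: h; exact: nbhs_right_lt.
rewrite /=.
have := sc y x h.
rewrite (ltW h0) /= (le_trans (ltW he) (ltW e1)) => /(_ isT) H.
change (h *: d) with (h * d).
have -> : h * d + x = h * y + (1 - h) * x by rewrite /d; ring.
have P : 0 <= mu / 2 * h * (e - h) * d ^+ 2.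
  have hm : 0 <= mu / 2 by rewrite divr_ge0.
  have eh : 0 <= e - h by rewrite subr_ge0 ltW.
  exact: (mulr_ge0 (mulr_ge0 (mulr_ge0 hm (ltW h0)) eh) (sqr_ge0 d)).
rewrite -(ler_pM2l h0) mulrA mulfV ?gt_eqF // mul1r.
rewrite /d in P *; nra.
Unshelve. all: by end_near.
Qed.

Lemma eps_close {mu D c : R} : 0 <= mu -> 0 <= D ->
  (forall e, 0 < e < 1 -> mu * (1 - e) * D <= c) -> mu * D <= c.
Proof.
move=> mu0 D0 H.
have h12 := H (1/2) ltac:(apply/andP; split; lra).
have E2 : mu * (1 - 1/2) * D = (mu * D) / 2 by field.
rewrite E2 in h12.
rewrite leNgt; apply/negP => cD.
have muD : 0 < mu * D by lra.
pose e := (mu * D - c) / (2 * (mu * D)).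
have e0 : 0 < e by apply: divr_gt0; lra.
have e1 : e < 1.
  rewrite ltr_pdivrMr; lra.
have := H e ltac:(apply/andP; split => //).
have -> : mu * (1 - e) * D = mu * D - (mu * D - c) / 2.
  rewrite /e; field; apply/andP; split; apply/eqP => E; move: muD; by rewrite E ?mulr0 ?mul0r ltxx.
lra.
Qed.

Lemma sc_mono (f : R -> R) mu : (forall x, derivable f x 1) -> 0 <= mu ->
  strongly_convex mu f -> forall x y,
  mu * (y - x) ^+ 2 <= (derive1 f y - derive1 f x) * (y - x).
Proof.
move=> df mu0 sc x y.
have H e : 0 < e < 1 -> mu * (1 - e) * (y - x) ^+ 2 <= (derive1 f y - derive1 f x) * (y - x).
  move=> he; have h1 := @sc_grad_eps f mu df mu0 sc x y e he.
  have h2 := @sc_grad_eps f mu df mu0 sc y x e he.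
  move: h2; rewrite (_ : (x - y) ^+ 2 = (y - x) ^+ 2); last by ring.
  move=> h2; nra.
exact: (eps_close mu0 (sqr_ge0 (y - x)) H).
Qed.

Lemma abel (G u : nat -> R) c M n : (1 <= n)%N ->
  (forall t, (1 <= t <= n.+1)%N -> c <= G t <= c + M) ->
  (forall t, (1 <= t)%N -> 0 < u t) -> (forall t, (1 <= t)%N -> u t <= u t.+1) ->
  0 <= \sum_(1 <= t < n.+1) (G t - G t.+1) * u t + (G n.+1 - c) * u n <= M * u n.
Proof.
elim: n => [//|n IH] _ HG hu hm.
rewrite big_nat_recr //=.
case: n IH HG => [|n] IH HG.
  rewrite big_geq //= add0r.
  have /andP[a b] := HG 1%N isT; have u1 := hu 1%N isT.
  apply/andP; split; nra.
have /andP[a b] : 0 <= _ <= _ := IH isT (fun t ht => HG t ltac:(lia)) hu hm.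
have /andP[g1 g2] := HG n.+2 ltac:(lia).
have u1 := hu n.+1 isT; have u2 := hm n.+1 isT.
apply/andP; split; nra.
Qed.

Lemma causal (g : R -> R) (r : (nat -> bool) -> nat -> R) (H : nat -> R -> bool -> R) r1 :
  injective g -> (forall o, r o 1%N = r1) ->
  (forall o t, (1 <= t)%N -> g (r o t.+1) = H t (r o t) (o t)) ->
  forall t o o', (1 <= t)%N -> (forall s, (1 <= s)%N -> (s < t)%N -> o s = o' s) ->
  r o t = r o' t.
Proof.
move=> gi h1 hrec; elim=> [//|t IH] o o' _ ho.
case: t IH ho => [|t] IH ho; first by rewrite !h1.
apply: gi; rewrite !hrec //; rewrite (IH o o') //; last first.
  by move=> s hs1 hs2; apply: ho => //; lia.
by rewrite ho.
Qed.

Definition flip {T} (i : 'I_T) (w : {ffun 'I_T -> bool}) : {ffun 'I_T -> bool} :=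
  [ffun j => if j == i then ~~ w j else w j].

Lemma flipK {T} (i : 'I_T) : involutive (flip i).
Proof.
by move=> w; apply/ffunP => j; rewrite !ffunE; case: eqP => //; rewrite negbK.
Qed.

Lemma obs_ofE T (w : {ffun 'I_T -> bool}) (i : 'I_T) : obs_of w i.+1 = w i.
Proof.
rewrite /obs_of /= insubT /= => [|h]; first exact: ltn_ord.
congr (w _); exact: val_inj.
Qed.

Lemma obs_of_flip T (i : 'I_T) w s : s.-1 != i -> obs_of (flip i w) s = obs_of w s.
Proof.
rewrite /obs_of; case: insubP => //= j _ hj hne.
rewrite ffunE; case: eqP => // E; move: hne; by rewrite -hj E eqxx.
Qed.

Lemma weight_sum (p : nat -> R) T : \sum_(w : {ffun 'I_T -> bool}) bern_weight p w = 1.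
Proof.
rewrite /bern_weight -(bigA_distr_bigA (fun (i : 'I_T) (b : bool) => if b then p i.+1 else 1 - p i.+1)).
apply: big1 => i _; rewrite big_bool /=; ring.
Qed.

Lemma zero_pair (p : nat -> R) T (i : 'I_T) (h : {ffun 'I_T -> bool} -> R) :
  p i.+1 != 0 -> (forall w, h (flip i w) = h w) ->
  \sum_(w : {ffun 'I_T -> bool}) bern_weight p w * (h w * ((w i)%:R / p i.+1 - 1)) = 0.
Proof.
move=> p0 hh.
pose F := fun w : {ffun 'I_T -> bool} => bern_weight p w * (h w * ((w i)%:R / p i.+1 - 1)).
change (\sum_w F w = 0).
have E : \sum_w F w = \sum_w F (flip i w).
  by rewrite (reindex_inj (inv_inj (flipK i))).
have Z : forall w, F w + F (flip i w) = 0.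
  move=> w; rewrite /F hh.
  set Rest := \prod_(j < T | j != i) (if w j then p j.+1 else 1 - p j.+1).
  have W1 : bern_weight p w = (if w i then p i.+1 else 1 - p i.+1) * Rest.
    by rewrite /bern_weight (bigD1 i).
  have W2 : bern_weight p (flip i w) = (if ~~ w i then p i.+1 else 1 - p i.+1) * Rest.
    rewrite /bern_weight (bigD1 i) //= ffunE eqxx; congr (_ * _).
    by apply: eq_bigr => j /negPf hj; rewrite ffunE hj.
  rewrite W1 W2 ffunE eqxx; by case: (w i) => /=; field.
have : 2 * \sum_w F w = 0.
  rewrite (_ : 2 * _ = \sum_w F w + \sum_w F (flip i w)); last by rewrite -E; ring.
  by rewrite -big_split; apply: big1 => v _; exact: Z.
lra.
Qed.

End S.

Theorem theorem1 (R : realType) (alpha B sigma mu L : R) (P : probability R R)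
  (rstar : nat -> R) (p : nat -> R) (eta : nat -> R) (r1 : R)
  (r : (nat -> bool) -> nat -> R) (T : nat) :
  0 < alpha < 1 -> 0 < B -> 0 < sigma ->
  supported_on P B -> has_bounded_density P ->
  (forall x, derivable (risk P alpha sigma) x 1) ->
  0 < mu -> strongly_convex mu (risk P alpha sigma) ->
  0 < L -> lipschitzL L (derive1 (risk P alpha sigma)) ->
  (forall t, (1 <= t)%N -> 0 <= rstar t <= B) ->
  (forall t, (1 <= t)%N -> 0 < p t <= 1) ->
  (forall t, (1 <= t)%N -> 0 < eta t) ->
  (forall s t, (1 <= s)%N -> (s <= t)%N -> eta t <= eta s) ->
  0 <= r1 <= B ->
  (forall o, r o 1%N = r1) ->
  (forall o t, (1 <= t)%N ->
     (derive1 (risk P alpha sigma)) (r o t.+1) =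
       (derive1 (risk P alpha sigma)) (r o t)
       - eta t * (alpha - ((rstar t > r o t)%R)%:R) * (((o t) : nat)%:R / p t)) ->
  (1 <= T)%N ->
  `| exp_miscov p rstar r T - alpha | <=
    (T%:R * eta T)^-1 *
      (L * B + L * eta 1%N / (mu * \big[Order.min/1]_(1 <= t < T.+1) p t)).
Proof.
move=> /andP[a0 a1] B0 sig0 supp dens hder mu0 hsc L0 hlip hrs hp heta hmon hr1 hrinit hrec T1.
set F := risk P alpha sigma in hder hsc hlip hrec *.
set g : R -> R := derive1 F in hlip hrec *.
have gm : forall x y, mu * (y - x) ^+ 2 <= (g y - g x) * (y - x).
  have := @sc_mono _ F mu hder (ltW mu0) hsc. done.
have g_le : forall x y, x <= y -> g x <= g y.
  move=> x y; rewrite le_eqVlt => /predU1P[->//|xy].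
  have := gm x y.
  have : 0 <= mu * (y - x) ^+ 2 by rewrite mulr_ge0 ?sqr_ge0 ?ltW.
  move=> h1 h2; have d0 : 0 < y - x by rewrite subr_gt0.
  by rewrite -subr_ge0 -(pmulr_lge0 _ d0); exact: le_trans h1 h2.
have g_inj : injective g.
  move=> x y E; have := gm x y; rewrite E subrr mul0r.
  rewrite pmulr_rle0 // => h; apply/eqP; rewrite eq_sym -subr_eq0 -sqrf_eq0.
  by rewrite eq_le h sqr_ge0.
have muL : mu <= L.
  have := gm 0 1; rewrite subr0 expr1n mulr1 mulr1 => h.
  have := hlip 1 0; rewrite subr0 normr1 mulr1 => h'.
  exact: le_trans h (le_trans (ler_norm _) h').
have gB : g B - g 0 <= L * B.
  have := hlip B 0; rewrite subr0 (gtr0_norm B0) => h'.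
  exact: le_trans (ler_norm _) h'.
set q := \big[Order.min/1]_(1 <= t < T.+1) p t.
have q0 : 0 < q.
  rewrite /q big_seq; apply: (big_ind (fun x => 0 < x)) => //.
    by move=> x y x0 y0; rewrite lt_min x0 y0.
  by move=> t; rewrite mem_index_iota => /andP[t1 _]; have /andP[] := hp t t1.
have qle : forall t, (1 <= t <= T)%N -> q <= p t.
  move=> t ht; rewrite /q; apply: (@bigmin_inf_seq _ _ _ _ _ t) => //.
  by rewrite mem_index_iota ltnS.
set K := eta 1%N / q.
have K0 : 0 < K by rewrite divr_gt0 // heta.
have aKK : alpha * K <= K by rewrite ler_piMl ?ltW.
set c0 := g 0 - alpha * K.
set M0 := g B - g 0 + K.
have hr1' := hr1; move/andP: hr1 => [r10 r1B].
have path : forall o t, (1 <= t <= T.+1)%N -> c0 <= g (r o t) <= c0 + M0.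
  move=> o; elim=> [//|t IH] /andP[t1 tT].
  case: t IH t1 tT => [|t] IH _ tT.
    rewrite hrinit; have := g_le _ _ r10; have := g_le _ _ r1B.
    have : 0 <= alpha * K by rewrite mulr_ge0 ?ltW.
    rewrite /c0 /M0 => h1 h2 h3; apply/andP; split; lra.
  have /andP[lo hi] := IH ltac:(by rewrite /= ltnW).
  have /andP[pt0 pt1] := hp t.+1 isT.
  have et0 := heta t.+1 isT.
  have et1 := hmon 1%N t.+1 isT isT.
  have qp := qle t.+1 ltac:(by rewrite /= -ltnS).
  have kK : eta t.+1 / p t.+1 <= K.
    rewrite /K ler_pdivrMr // mulrAC ler_pdivlMr //.
    have h1 : 0 <= (eta 1%N - eta t.+1) * p t.+1 by apply: mulr_ge0; [rewrite subr_ge0 | exact: ltW].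
    have h2 : 0 <= eta t.+1 * (p t.+1 - q) by apply: mulr_ge0; [exact: ltW | rewrite subr_ge0].
    rewrite mulrBl in h1; rewrite mulrBr in h2; lra.
  have k0 : 0 <= eta t.+1 / p t.+1 by rewrite divr_ge0 ?ltW.
  set k := eta t.+1 / p t.+1 in kK k0 *.
  have akk : alpha * k <= k by rewrite ler_piMl // ltW.
  have ak0 : 0 <= alpha * k by rewrite mulr_ge0 // ltW.
  have aK : alpha * k <= alpha * K by rewrite ler_pM2l.
  have aK' : (1 - alpha) * k <= (1 - alpha) * K by rewrite ler_pM2l ?subr_gt0.
  rewrite !mulrBl !mul1r in aK'.
  have /andP[rs0 rsB] := hrs t.+1 isT.
  rewrite hrec //.
  case: (o t.+1) => /=; last by rewrite mul0r mulr0 subr0 lo hi.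
  case: ltP => hE /=.
    have gle := g_le _ _ (ltW (lt_le_trans hE rsB)).
    rewrite (_ : eta t.+1 * (alpha - 1) * (1 / p t.+1) = (alpha * k - k)); last by rewrite /k; ring.
    rewrite /c0 /M0 in lo hi *; apply/andP; split; lra.
  have gle := g_le _ _ (le_trans rs0 hE).
  rewrite (_ : eta t.+1 * (alpha - 0) * (1 / p t.+1) = alpha * k); last by rewrite /k; ring.
  rewrite /c0 /M0 in lo hi *; apply/andP; split; lra.
have hu : forall t, (1 <= t)%N -> 0 < (eta t)^-1.
  by move=> t ht; rewrite invr_gt0 heta.
have hm : forall t, (1 <= t)%N -> (eta t)^-1 <= (eta t.+1)^-1.
  move=> t ht; rewrite lef_pV2 ?posrE ?heta //; exact: hmon.
have pathX : forall o : nat -> bool,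
  `| \sum_(1 <= t < T.+1) (alpha - ((rstar t > r o t)%R)%:R) * ((o t)%:R / p t) |
    <= M0 * (eta T)^-1.
  move=> o.
  have -> : \sum_(1 <= t < T.+1) (alpha - ((rstar t > r o t)%R)%:R) * ((o t)%:R / p t)
         = \sum_(1 <= t < T.+1) (g (r o t) - g (r o t.+1)) * (eta t)^-1.
    apply: eq_big_nat => t /andP[t1 _]; rewrite hrec //.
    have e0 := heta t t1.
    have /andP[pt0 _] := hp t t1.
    field; rewrite ?gt_eqF //; apply/andP; split; rewrite gt_eqF //.
  have /andP[A1 A2] := abel (fun t => g (r o t)) (fun t => (eta t)^-1) c0 M0 T T1
      (fun t ht => path o t ht) hu hm.
  have /andP[b1 b2] := path o T.+1 ltac:(by rewrite /=).
  have uT := hu T T1.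
  have p1 : 0 <= (g (r o T.+1) - c0) * (eta T)^-1 by apply: mulr_ge0; [rewrite subr_ge0 | exact: ltW].
  have p2 : (g (r o T.+1) - c0) * (eta T)^-1 <= M0 * (eta T)^-1.
    by apply: ler_wpM2r; [exact: ltW | rewrite lerBlDl].
  rewrite ler_norml; apply/andP; split; lra.
have Mf : M0 <= L * B + L * eta 1%N / (mu * q).
  have -> : L * eta 1%N / (mu * q) = (L / mu) * K.
    by rewrite /K; field; rewrite ?gt_eqF.
  have Lmu : 1 <= L / mu by rewrite ler_pdivlMr // mul1r.
  have : K <= (L / mu) * K by rewrite ler_peMl // ltW.
  rewrite /M0; lra.
pose Ew (w : {ffun 'I_T -> bool}) (t : nat) : R := ((rstar t > r (obs_of w) t)%R)%:R.
pose X (w : {ffun 'I_T -> bool}) := \sum_(1 <= t < T.+1) (alpha - Ew w t) * ((obs_of w t)%:R / p t).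
have caus := @causal _ g r (fun t x b => g x - eta t * (alpha - ((rstar t > x)%R)%:R) * (b%:R / p t)) r1 g_inj hrinit hrec.
have key : \sum_w bern_weight p w * X w
    = \sum_w bern_weight p w * \sum_(i < T) (alpha - Ew w i.+1).
  apply/eqP; rewrite -subr_eq0 -sumrB; apply/eqP.
  rewrite (eq_bigr (fun w => \sum_(i < T) bern_weight p w *
      ((alpha - Ew w i.+1) * ((w i)%:R / p i.+1 - 1)))); last first.
    move=> w _; rewrite -mulrBr /X big_add1 /= big_mkord -sumrB big_distrr.
    by apply: eq_bigr => i _; rewrite obs_ofE; congr (_ * _); ring.
  rewrite exchange_big /=; apply: big1 => i _.
  apply: (@zero_pair _ p T i (fun w => alpha - Ew w i.+1)).
    by have /andP[pt0 _] := hp i.+1 isT; rewrite gt_eqF.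
  move=> w /=; rewrite /Ew (caus i.+1 (obs_of (flip i w)) (obs_of w)) //.
  move=> s s1 si; apply: obs_of_flip.
  by rewrite neq_ltn; apply/orP; left; case: s s1 si.
have wt0 : forall w : {ffun 'I_T -> bool}, 0 <= bern_weight p w.
  move=> w; apply: prodr_ge0 => i _; have /andP[pt0 pt1] := hp i.+1 isT.
  by case: (w i); rewrite ?subr_ge0 // ltW.
have A_eq : exp_miscov p rstar r T =
    T%:R^-1 * \sum_w bern_weight p w * \sum_(i < T) Ew w i.+1.
  rewrite /exp_miscov big_distrr; apply: eq_bigr => w _.
  by rewrite big_add1 /= big_mkord mulrCA.
have Y_eq : \sum_w bern_weight p w * \sum_(i < T) (alpha - Ew w i.+1)
    = alpha * T%:R - \sum_w bern_weight p w * \sum_(i < T) Ew w i.+1.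
  under eq_bigr do rewrite sumrB sumr_const card_ord mulrBr.
  by rewrite sumrB -big_distrl /= weight_sum mul1r mulr_natr.
have uT := hu T T1.
have bound : `| \sum_w bern_weight p w * X w | <= M0 * (eta T)^-1.
  apply: le_trans (ler_norm_sum _ _ _) _.
  apply: (@le_trans _ _ (\sum_w bern_weight p w * (M0 * (eta T)^-1))).
    apply: ler_sum => w _; rewrite normrM ger0_norm ?wt0 //.
    by apply: ler_wpM2l; [exact: wt0 | exact: pathX].
  by rewrite -big_distrl /= weight_sum mul1r.
rewrite A_eq.
have T0 : (T%:R : R) != 0 by rewrite pnatr_eq0 -lt0n.
have -> : T%:R^-1 * \sum_w bern_weight p w * \sum_(i < T) Ew w i.+1 - alpha
    = - (T%:R^-1 * \sum_w bern_weight p w * X w).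
  by rewrite key Y_eq; field.
set Mfv := L * B + _ in Mf *.
rewrite normrN normrM ger0_norm ?invr_ge0 ?ler0n // invfM -mulrA.
apply: ler_wpM2l; first by rewrite invr_ge0 ler0n.
apply: le_trans bound _; rewrite mulrC.
by apply: ler_wpM2l; [exact: ltW | exact: Mf].
Qed.
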